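(* Let $K=\langle \mathcal{T}_{strict},\mathcal{T}_{C_1},\ldots,\mathcal{T}_{C_k},\mathcal{A}\rangle$ be a ranked $\mathcal{EL}^{+}_{\bot}$ knowledge base over $\mathcal{C}=\{C_1,\ldots,C_k\}$, and let $\mathcal{M}=\langle \Delta,<_{C_1},\ldots,<_{C_k},<,\cdot^I\rangle$ be a (finite) concept-wise multipreference interpretation. Then the global preference relation $<$ is irreflexive, transitive and well-founded.
   Context: $\mathcal{EL}^{+}_{\bot}$ concepts are built by $C::=A\mid\top\mid\bot\mid C\sqcap C\mid \exists r.C$ with $A$ a concept name and $r$ a role name; interpretations $I=\langle\Delta,\cdot^I\rangle$ are as usual ($(\exists r.C)^I=\{x\mid \exists y,(x,y)\in r^I, y\in C^I\}$ etc.); a TBox contains concept inclusions $C\sqsubseteq D$ and role inclusions $r_1\circ\cdots\circ r_n\sqsubseteq r$, an ABox contains assertions $C(a)$, $r(a,b)$; $\models$ denotes standard $\mathcal{EL}^{+}_{\bot}$ entailment. A typicality inclusion has the form $\mathbf{T}(C)\sqsubseteq D$. A ranked knowledge base over a finite set $\mathcal{C}=\{C_1,\ldots,C_k\}$ of $\mathcal{EL}^{+}_{\bot}$ concepts is a tuple $K=\langle \mathcal{T}_{strict},\mathcal{T}_{C_1},\ldots,\mathcal{T}_{C_k},\mathcal{A}\rangle$ where $\mathcal{T}_{strict}$ is a set of concept and role inclusions, $\mathcal{A}$ an ABox, and each $\mathcal{T}_{C_j}$ a finite set of pairs $(\mathbf{T}(C_j)\sqsubseteq D, r)$ with $r$ a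 non-negative integer (its rank). Specificity: for $C_h,C_j\in\mathcal{C}$, $C_h\succ C_j$ iff $\mathcal{T}_{strict}\models C_h\sqsubseteq C_j$ and $\mathcal{T}_{strict}\not\models C_j\sqsubseteq C_h$. A (finite) concept-wise multipreference interpretation is a tuple $\langle\Delta,<_{C_1},\ldots,<_{C_k},<,\cdot^I\rangle$ where $\Delta$ is a finite non-empty domain; each $<_{C_i}$ is an irreflexive, transitive, well-founded and modular relation on $\Delta$ (modular: $x<_{C_i}y$ implies $x<_{C_i}z$ or $z<_{C_i}y$ for all $z$); $x\leq_{C_j}y$ means that $y<_{C_j}x$ does not hold; the global relation $<$ is defined by: $x<y$ iff (i) $x<_{C_i}y$ for some $C_i\in\mathcal{C}$, and (ii) for all $C_j\in\mathcal{C}$, either $x\leq_{C_j}y$ or there is $C_h\in\mathcal{C}$ with $C_h\succ C_j$ and $x<_{C_h}y$; and $\cdot^I$ is an $\mathcal{EL}^{+}_{\bot}$ interpretation function extended by $(\mathbf{T}(C))^I=\min_<(C^I)=\{u\in C^I\mid \nexists z\in C^I, z<u\}$. *)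

(* Defs.v *)
From Stdlib Require List.
From mathcomp Require Import all_boot.
Unset Printing Implicit Defensive.

Definition cname := nat.
Definition rname := nat.
Definition iname := nat.

Inductive concept : Type :=
| CName of cname
| CTop
| CBot
| CAnd of concept & concept
| CEx of rname & concept.

Record interp := Interp {
  idom : Type;
  i_ne : inhabited idom;
  iconc : cname -> idom -> Prop;
  irole : rname -> idom -> idom -> Prop;
  iind : iname -> idom }.




Fixpoint ext (I : interp) (C : concept) : idom I -> Prop :=
  match C with
  | CName A => iconc I A
  | CTop => fun _ => True
  | CBot => fun _ => False
  | CAnd C1 C2 => fun x => ext I C1 x /\ ext I C2 x
  | CEx r C1 => fun x => exists y, irole I r x y /\ ext I C1 y
  end.

Fixpoint chain (I : interp) (r : rname) (rs : seq rname) : idom I -> idom I -> Prop :=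
  match rs with
  | [::] => irole I r
  | r' :: rs' => fun x z => exists y, irole I r x y /\ chain I r' rs' y z
  end.

(** TBox axioms: concept inclusions C [= D and role inclusions
    r1 o ... o rn [= r  (n >= 1, chain given as head r1 and tail). *)
Inductive tbox_axiom : Type :=
| CIncl of concept & concept
| RIncl of rname & seq rname & rname.

Definition sat_axiom (I : interp) (a : tbox_axiom) : Prop :=
  match a with
  | CIncl C D => forall x, ext I C x -> ext I D x
  | RIncl r1 rs r => forall x y, chain I r1 rs x y -> irole I r x y
  end.

Definition tbox := seq tbox_axiom.

Definition models (I : interp) (T : tbox) : Prop :=
  List.Forall (sat_axiom I) T.

Definition entails (T : tbox) (C D : concept) : Prop :=
  forall I : interp, models I T -> forall x, ext I C x -> ext I D x.

Inductive assertion : Type :=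
| CAssert of concept & iname
| RAssert of rname & iname & iname.

(** Ranked KB over C = {C_1,...,C_k} (given by Cs : 'I_k -> concept):
    strict TBox, for each j a finite set of ranked typicality inclusions
    (T(C_j) [= D, r), represented as pairs (D, r), and an ABox. *)
Record ranked_kb (k : nat) (Cs : 'I_k -> concept) := RankedKB {
  kb_strict : tbox;
  kb_typ : 'I_k -> seq (concept * nat);
  kb_abox : seq assertion }.

Definition more_specific (T : tbox) k (Cs : 'I_k -> concept) (h j : 'I_k) : Prop :=
  entails T (Cs h) (Cs j) /\ ~ entails T (Cs j) (Cs h).

Definition modular (D : Type) (R : D -> D -> Prop) : Prop :=
  forall x y z, R x y -> R x z \/ R z y.

Record cw_interp (k : nat) := CWInterp {
  cw_dom : finType;
  cw_ne : 0 < #|cw_dom|;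
  cw_pref : 'I_k -> cw_dom -> cw_dom -> Prop;
  cw_irr : forall i x, ~ cw_pref i x x;
  cw_trans : forall i x y z, cw_pref i x y -> cw_pref i y z -> cw_pref i x z;
  cw_wf : forall i, well_founded (cw_pref i);
  cw_mod : forall i, modular cw_dom (cw_pref i);
  cw_conc : cname -> cw_dom -> Prop;
  cw_role : rname -> cw_dom -> cw_dom -> Prop;
  cw_ind : iname -> cw_dom }.


Definition cw_le k (M : cw_interp k) (j : 'I_k) (x y : cw_dom k M) : Prop :=
  ~ cw_pref k M j y x.

Definition global_lt k (Cs : 'I_k -> concept) (T : tbox) (M : cw_interp k)
  (x y : cw_dom k M) : Prop :=
  (exists i, cw_pref k M i x y) /\
  (forall j, cw_le k M j x y \/
             exists h, more_specific T k Cs h j /\ cw_pref k M h x y).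

(* Main.v *)
Require Import Defs.
From mathcomp Require Import all_boot.
From Stdlib Require Import Classical ClassicalEpsilon.

Definition decb (P : Prop) : bool :=
  if excluded_middle_informative P then true else false.

Lemma decbP (P : Prop) : reflect P (decb P).
Proof. rewrite /decb; case: excluded_middle_informative => h; by constructor. Qed.

Lemma fin_wf (T : finType) (R : T -> T -> Prop) :
  (forall x, ~ R x x) -> (forall x y z, R x y -> R y z -> R x z) ->
  well_founded R.
Proof.
move=> irr tr.
have H : forall n x, #|[pred y | decb (R y x)]| <= n -> Acc R x.
  elim=> [|n IH] x hx; constructor=> y Ryx.
  - have : 0 < #|[pred y | decb (R y x)]|.
      by apply/card_gt0P; exists y; rewrite inE; apply/decbP.
    by rewrite leqn0 in hx; rewrite (eqP hx).
  - apply: IH; rewrite -ltnS; apply: leq_trans hx.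
    apply: proper_card; apply/properP; split.
      apply/subsetP=> z; rewrite !inE => /decbP Rzy; apply/decbP; exact: tr Rzy Ryx.
    exists y; rewrite !inE; first by apply/decbP.
    by apply/negP => /decbP /irr.
by move=> x; apply: (H _ x (leqnn _)).
Qed.

Lemma ms_wf (T : tbox) k (Cs : 'I_k -> concept) :
  well_founded (fun a b => more_specific T k Cs a b).
Proof.
apply: fin_wf.
  by move=> x [_ []]; move=> I HI y; exact.
move=> a b c [ab nba] [bc ncb]; split.
  by move=> I HI x /(ab I HI) /(bc I HI).
by move=> ca; apply: ncb => I HI x /(ca I HI) /(ab I HI).
Qed.

Theorem proposition1 (k : nat) (Cs : 'I_k -> concept) (K : ranked_kb k Cs)
    (M : cw_interp k) :
  let lt := global_lt k Cs (kb_strict k Cs K) M in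
  (forall x, ~ lt x x) /\
  (forall x y z, lt x y -> lt y z -> lt x z) /\
  well_founded lt.
Proof.
set T := kb_strict k Cs K.
move=> lt.
have irr : forall x, ~ lt x x by move=> x [[i /cw_irr]].
have tr : forall x y z, lt x y -> lt y z -> lt x z.
  move=> x y z [A1 A2] [B1 B2].
  have Key : forall h, cw_pref k M h x y \/ cw_pref k M h y z ->
      exists h', (h' = h \/ more_specific T k Cs h' h) /\ cw_pref k M h' x z.
    move=> h; elim: h / (ms_wf T k Cs h) => h _ IH [Hxy|Hyz].
    - case: (cw_mod k M h x y z Hxy) => [Hxz|Hzy]; first by exists h; split; [left|].
      case: (B2 h) => [/(_ Hzy) []|[h2 [ms2 P2]]].
      case: (IH h2 ms2 (or_intror P2)) => h' [[->|ms'] P'].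
        by exists h2; split; [right|].
      exists h'; split; last exact P'; right.
      case: ms' ms2 => [e1 ne1] [e2 ne2]; split.
        by move=> I HI w /(e1 I HI) /(e2 I HI).
      by move=> c; apply: ne1 => I HI w /(e2 I HI) /(c I HI).
    - case: (cw_mod k M h y z x Hyz) => [Hyx|Hxz]; last by exists h; split; [left|].
      case: (A2 h) => [/(_ Hyx) []|[h2 [ms2 P2]]].
      case: (IH h2 ms2 (or_introl P2)) => h' [[->|ms'] P'].
        by exists h2; split; [right|].
      exists h'; split; last exact P'; right.
      case: ms' ms2 => [e1 ne1] [e2 ne2]; split.
        by move=> I HI w /(e1 I HI) /(e2 I HI).
      by move=> c; apply: ne1 => I HI w /(e2 I HI) /(c I HI).
  have trms : forall a b c, more_specific T k Cs a b -> more_specific T k Cs b c ->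
      more_specific T k Cs a c.
    move=> a b c [e1 ne1] [e2 ne2]; split.
      by move=> I HI w /(e1 I HI) /(e2 I HI).
    by move=> cc; apply: ne1 => I HI w /(e2 I HI) /(cc I HI).
  split.
    case: A1 => i Hi; case: (Key i (or_introl Hi)) => h' [_ P]; by exists h'.
  move=> j; case: (classic (cw_pref k M j z x)) => Hzx; last by left.
  right.
  case: (cw_mod k M j z x y Hzx) => [Hzy|Hyx].
  - case: (B2 j) => [/(_ Hzy) []|[h [msh Ph]]].
    case: (Key h (or_intror Ph)) => h' [[->|ms'] P']; first by exists h; split.
    by exists h'; split; [exact: trms ms' msh|].
  - case: (A2 j) => [/(_ Hyx) []|[h [msh Ph]]].
    case: (Key h (or_introl Ph)) => h' [[->|ms'] P']; first by exists h; split.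
    by exists h'; split; [exact: trms ms' msh|].
split; first exact irr.
split; first exact tr.
exact: fin_wf irr tr.
Qed.
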